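(* Let $s$ be a real-valued function with $s(t)=0$ for $t\notin[0,T_s]$ and $\int_0^{T_s}s(t)^2dt=1$, and let $\tau\in(0,T_s)$. Assume the matrix $\tilde T(\omega)$ defined in the context is positive definite for every $\omega\in[-\pi,\pi]$. Then for every $\rho_0>0$ and all nonzero complex numbers $\alpha_1,\alpha_2$, $$I_{E\text{-}MacA}>\log\left(1+\rho_0(|\alpha_1|^2+|\alpha_2|^2)\right).$$ The right-hand side is the mutual information of the synchronous space-time-coded $2\times1$ relay–destination link.
   Context: Let $S(t)=[s(t),s(t-\tau)]^T$ and $G(k)=\int_{-\infty}^{\infty}S(t)S(t-kT_s)^Tdt$ for $k\in\mathbb Z$. Define $\tilde T(\omega)=\sum_{k\in\mathbb Z}G(k)e^{-jk\omega}$ for $\omega\in[-\pi,\pi]$, a Hermitian $2\times 2$ matrix. For $s$ supported in $[0,T_s]$, its diagonal entries satisfy $\tilde T_{11}(\omega)=\tilde T_{22}(\omega)=1$. Define $$I_{E\text{-}MacA}=\frac1{2\pi}\int_{-\pi}^{\pi}\log\left(1+\rho_0(|\alpha_1|^2+|\alpha_2|^2)\tilde T_{11}(\omega)+\rho_0^2|\alpha_1|^2|\alpha_2|^2\det\tilde T(\omega)\right)d\omega.$$ *)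

(* Defs.v *)
From Stdlib Require Import Reals ZArith ClassicalEpsilon.
Open Scope R_scope.

Record Cpx := mkC { Re : R ; Im : R }.
Definition Cadd (z w : Cpx) : Cpx := mkC (Re z + Re w) (Im z + Im w).
Definition Csub (z w : Cpx) : Cpx := mkC (Re z - Re w) (Im z - Im w).
Definition Cmul (z w : Cpx) : Cpx :=
  mkC (Re z * Re w - Im z * Im w) (Re z * Im w + Im z * Re w).
Definition Cconj (z : Cpx) : Cpx := mkC (Re z) (- Im z).
Definition C0 : Cpx := mkC 0 0.
Definition Cnorm2 (z : Cpx) : R := Re z * Re z + Im z * Im z.

(* Riemann integral of f on [a,b] when it exists (arbitrary value otherwise). *)
Definition RInt (f : R -> R) (a b : R) : R :=
  epsilon (inhabits 0)
    (fun l => exists pr : Riemann_integrable f a b, RiemannInt pr = l).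

Definition lim_seq (u : nat -> R) : R :=
  epsilon (inhabits 0) (fun l => Un_cv u l).

Definition RInt_R (f : R -> R) : R :=
  lim_seq (fun n => RInt f (- INR n) (INR n)).

(* Sum over k in Z: limit of symmetric partial sums \sum_{k=-N}^{N} a k. *)
Definition zpartial (a : Z -> R) (N : nat) : R :=
  sum_f_R0 (fun m => a (Z.of_nat m - Z.of_nat N)%Z) (2 * N).
Definition zsum (a : Z -> R) : R := lim_seq (zpartial a).

Inductive idx := I1 | I2.

Definition Scomp (s : R -> R) (tau : R) (i : idx) (t : R) : R :=
  match i with I1 => s t | I2 => s (t - tau) end.

Definition G (s : R -> R) (tau Ts : R) (k : Z) (i j : idx) : R :=
  RInt_R (fun t => Scomp s tau i t * Scomp s tau j (t - IZR k * Ts)).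

(* \tilde T(w)_{ij} = \sum_k G(k)_{ij} e^{-j k w}, e^{-jkw} = cos(kw) - j sin(kw) *)
Definition Ttilde (s : R -> R) (tau Ts w : R) (i j : idx) : Cpx :=
  mkC (zsum (fun k => G s tau Ts k i j * cos (IZR k * w)))
      (zsum (fun k => - (G s tau Ts k i j * sin (IZR k * w)))).

Definition detT (s : R -> R) (tau Ts w : R) : Cpx :=
  Csub (Cmul (Ttilde s tau Ts w I1 I1) (Ttilde s tau Ts w I2 I2))
       (Cmul (Ttilde s tau Ts w I1 I2) (Ttilde s tau Ts w I2 I1)).

Definition quad_form (M : idx -> idx -> Cpx) (z1 z2 : Cpx) : Cpx :=
  Cadd (Cadd (Cmul (Cconj z1) (Cmul (M I1 I1) z1))
             (Cmul (Cconj z1) (Cmul (M I1 I2) z2)))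
       (Cadd (Cmul (Cconj z2) (Cmul (M I2 I1) z1))
             (Cmul (Cconj z2) (Cmul (M I2 I2) z2))).

Definition pos_def (M : idx -> idx -> Cpx) : Prop :=
  forall z1 z2 : Cpx, (z1 <> C0 \/ z2 <> C0) ->
    Im (quad_form M z1 z2) = 0 /\ 0 < Re (quad_form M z1 z2).

(* I_{E-MacA}; T11 and det T are real (T Hermitian), we take their real parts. *)
Definition I_EMacA (s : R -> R) (tau Ts rho0 : R) (a1 a2 : Cpx) : R :=
  / (2 * PI) *
  RInt (fun w => ln (1 + rho0 * (Cnorm2 a1 + Cnorm2 a2) * Re (Ttilde s tau Ts w I1 I1)
                     + rho0 ^ 2 * Cnorm2 a1 * Cnorm2 a2 * Re (detT s tau Ts w)))
       (- PI) PI.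

(* Main.v *)
Require Import Defs.
From Stdlib Require Import Reals ZArith ClassicalEpsilon.
From Stdlib Require Import Lra Lia Psatz FunctionalExtensionality List RList RiemannInt_SF RiemannInt.
Open Scope R_scope.
Lemma RInt_eq f a b (pr : Riemann_integrable f a b) : RInt f a b = RiemannInt pr.
Proof.
  unfold RInt.
  destruct (epsilon_spec (inhabits 0) (fun l => exists pr, RiemannInt pr = l)
     (ex_intro _ (RiemannInt pr) (ex_intro _ pr eq_refl))) as [pr' H].
  rewrite <- H. apply RiemannInt_P5.
Qed.

Lemma lim_seq_eq u l : Un_cv u l -> lim_seq u = l.
Proof.
  intro H. unfold lim_seq.
  apply (UL_sequence u). 2: exact H.
  apply (epsilon_spec (inhabits 0) (fun l => Un_cv u l) (ex_intro _ l H)).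
Qed.

Lemma Un_cv_ev u l N : (forall n, (n >= N)%nat -> u n = l) -> Un_cv u l.
Proof.
  intros H eps He. exists N. intros n Hn. rewrite H by lia. unfold Rdist.
  replace (l - l) with 0 by ring. rewrite Rabs_R0. exact He.
Qed.

Lemma RInt_zero f a b : (forall t, f t = 0) -> RInt f a b = 0.
Proof.
  intro H. assert (f = fct_cte 0) as ->.
  { apply functional_extensionality; intro t; rewrite H; reflexivity. }
  rewrite (RInt_eq _ _ _ (RiemannInt_P14 a b 0)), RiemannInt_P15. ring.
Qed.

Lemma RInt_R_zero f : (forall t, f t = 0) -> RInt_R f = 0.
Proof.
  intro H. unfold RInt_R. apply lim_seq_eq. apply (Un_cv_ev _ _ 0).
  intros; apply RInt_zero; exact H.
Qed.

Lemma zero_open_step f a b : a <= b -> (forall x, a < x < b -> f x = 0) -> IsStepFun f a b.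
Proof.
  intros Hab H. exists (cons a (cons b nil)). exists (cons 0 nil).
  unfold adapted_couple. repeat split.
  - intros i Hi. simpl in Hi. destruct i; [simpl; exact Hab | lia].
  - simpl. unfold Rmin; destruct (Rle_dec a b); lra.
  - simpl. unfold Rmax; destruct (Rle_dec a b); lra.
  - intros i Hi. simpl in Hi. destruct i; [| lia]. simpl.
    intros x Hx. unfold open_interval in Hx. apply H; exact Hx.
Qed.

Lemma step_integrable f a b : IsStepFun f a b -> Riemann_integrable f a b.
Proof.
  intros Hs eps. exists (mkStepFun Hs). exists (mkStepFun (StepFun_P4 a b 0)).
  split.
  - intros t _. simpl. unfold fct_cte. replace (f t - f t) with 0 by ring. rewrite Rabs_R0; lra.
  - rewrite StepFun_P18. replace (0 * (b - a)) with 0 by ring. rewrite Rabs_R0. apply cond_pos.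
Qed.

Lemma zero_open_int f a b : a <= b -> (forall x, a < x < b -> f x = 0) ->
  { pr : Riemann_integrable f a b | RiemannInt pr = 0 }.
Proof.
  intros Hab H. exists (step_integrable _ _ _ (zero_open_step f a b Hab H)).
  rewrite (RiemannInt_P18 _ (RiemannInt_P14 a b 0) Hab).
  - rewrite RiemannInt_P15; ring.
  - intros x Hx; unfold fct_cte; apply H; exact Hx.
Qed.

Lemma spike_int f a b t0 : a <= b -> (forall t, t <> t0 -> f t = 0) -> RInt f a b = 0.
Proof.
  intros Hab H.
  destruct (Rlt_dec a t0) as [H1|H1]; [destruct (Rlt_dec t0 b) as [H2|H2]|].
  - destruct (zero_open_int f a t0) as [p1 E1]; [lra| intros x Hx; apply H; lra |].
    destruct (zero_open_int f t0 b) as [p2 E2]; [lra| intros x Hx; apply H; lra |].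
    pose (p3 := RiemannInt_P24 p1 p2).
    rewrite (RInt_eq _ _ _ p3), <- (RiemannInt_P26 p1 p2 p3), E1, E2. ring.
  - destruct (zero_open_int f a b) as [p E]; [lra| intros x Hx; apply H; lra |].
    rewrite (RInt_eq _ _ _ p); exact E.
  - destruct (zero_open_int f a b) as [p E]; [lra| intros x Hx; apply H; lra |].
    rewrite (RInt_eq _ _ _ p); exact E.
Qed.
Lemma pos_Rl_map h l i : (i < length l)%nat -> pos_Rl (map h l) i = h (pos_Rl l i).
Proof.
  revert i; induction l as [|x l IH]; intros i Hi; simpl in Hi; [lia|].
  destruct i; simpl; [reflexivity|]. apply IH; lia.
Qed.

Lemma stepfun_comp (h : R -> R) {a b} (phi : StepFun a b) : IsStepFun (fun t => h (phi t)) a b.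
Proof.
  destruct phi as [g [l [lf Had]]]. simpl.
  exists l. exists (map h lf).
  destruct Had as [H1 [H2 [H3 [H4 H5]]]].
  repeat split; auto.
  - rewrite length_map; exact H4.
  - intros i Hi. rewrite pos_Rl_map by lia.
    intros x Hx. rewrite (H5 i Hi x Hx). reflexivity.
Qed.

Fixpoint sumabs (l : list R) : R := match l with nil => 0 | x :: l => Rabs x + sumabs l end.

Lemma sumabs_nonneg l : 0 <= sumabs l.
Proof. induction l; simpl; [lra|]. pose proof (Rabs_pos a); lra. Qed.

Lemma adapted_bound f l : forall lf, ordered_Rlist l -> length l = S (length lf) ->
  (forall i, (i < pred (length l))%nat ->
     constant_D_eq f (open_interval (pos_Rl l i) (pos_Rl l (S i))) (pos_Rl lf i)) ->
  forall x, pos_Rl l 0 <= x <= pos_Rl l (pred (length l)) ->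
  Rabs (f x) <= sumabs (map f l) + sumabs lf.
Proof.
  induction l as [|r l IH]; intros lf Hord Hlen Hc x Hx; [simpl in Hlen; discriminate|].
  destruct l as [|r2 l'].
  - simpl in Hx. assert (x = r) by lra. subst. simpl.
    pose proof (sumabs_nonneg lf); lra.
  - destruct lf as [|c lf']; [simpl in Hlen; discriminate|].
    simpl in Hlen. injection Hlen as Hlen.
    pose proof (sumabs_nonneg (map f (r2 :: l'))) as N1.
    pose proof (sumabs_nonneg lf') as N2.
    pose proof (Rabs_pos c) as N3. pose proof (Rabs_pos (f r)) as N4.
    change (sumabs (map f (r :: r2 :: l'))) with (Rabs (f r) + sumabs (map f (r2 :: l'))).
    change (sumabs (c :: lf')) with (Rabs c + sumabs lf').
    assert (Hr2 : r <= r2) by (apply (Hord 0%nat); simpl; lia).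
    destruct (Rle_dec x r2) as [Hle|Hgt].
    + destruct (Req_dec x r) as [->|Hne]; [lra|].
      destruct (Req_dec x r2) as [->|Hne2].
      * change (sumabs (map f (r2 :: l'))) with (Rabs (f r2) + sumabs (map f l')).
        pose proof (sumabs_nonneg (map f l')); lra.
      * assert (f x = c) as ->.
        { apply (Hc 0%nat); [simpl; lia|]. unfold open_interval; simpl in Hx |- *; lra. }
        lra.
    + assert (Rabs (f x) <= sumabs (map f (r2 :: l')) + sumabs lf'); [|lra].
      apply IH.
      * apply (RList_P4 _ r); exact Hord.
      * simpl; rewrite Hlen; reflexivity.
      * intros i Hi. apply (Hc (S i)). simpl in Hi |- *; lia.
      * simpl in Hx |- *; lra.
Qed.

Definition SF_bound {a b} (phi : StepFun a b) : R :=
  sumabs (map phi (subdivision phi)) + sumabs (subdivision_val phi).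

Lemma SF_bound_ok {a b} (phi : StepFun a b) : a <= b ->
  forall x, a <= x <= b -> Rabs (phi x) <= SF_bound phi.
Proof.
  intros Hab x Hx. pose proof (StepFun_P1 phi) as [H1 [H2 [H3 [H4 H5]]]].
  unfold SF_bound. apply adapted_bound; auto.
  rewrite H2, H3. unfold Rmin, Rmax; destruct (Rle_dec a b); lra.
Qed.

Lemma SF_bound_nonneg {a b} (phi : StepFun a b) : 0 <= SF_bound phi.
Proof. unfold SF_bound. pose proof (sumabs_nonneg (map phi (subdivision phi))).
  pose proof (sumabs_nonneg (subdivision_val phi)). lra. Qed.

Lemma clip_facts B u v : 0 <= B -> Rabs u <= B ->
  let w := Rmax (-B) (Rmin B v) in
  Rabs (u - w) <= Rabs (u - v) /\ Rabs (u - w) <= 2 * B /\ Rabs (u + w) <= 2 * B.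
Proof.
  intros HB Hu w. unfold w, Rmax, Rmin.
  destruct (Rle_dec B v); destruct (Rle_dec (-B) _);
  unfold Rabs in *; repeat destruct Rcase_abs; lra.
Qed.

Lemma integrable_sq f a b : a <= b -> Riemann_integrable f a b ->
  Riemann_integrable (fun t => f t * f t) a b.
Proof.
  intros Hab Hf.
  destruct (Hf (mkposreal 1 Rlt_0_1)) as [phi0 [psi0 [Hb0 _]]].
  pose (B := SF_bound phi0 + SF_bound psi0).
  assert (HBpos : 0 <= B) by (pose proof (SF_bound_nonneg phi0); pose proof (SF_bound_nonneg psi0); unfold B; lra).
  assert (HB : forall t, a <= t <= b -> Rabs (f t) <= B).
  { intros t Ht. assert (Ht' : Rmin a b <= t <= Rmax a b) by (unfold Rmin, Rmax; destruct (Rle_dec a b); lra).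
    pose proof (Hb0 t Ht'). pose proof (SF_bound_ok phi0 Hab t Ht).
    pose proof (SF_bound_ok psi0 Hab t Ht).
    pose proof (Rabs_triang_inv (f t) (phi0 t)). pose proof (Rle_abs (psi0 t)).
    unfold B; lra. }
  intro eps.
  assert (Hep : 0 < eps / (2 * B + 1)) by (apply Rdiv_lt_0_compat; [apply cond_pos | lra]).
  destruct (Hf (mkposreal _ Hep)) as [phi [psi [Hp Hi]]]. simpl in Hi.
  exists (mkStepFun (stepfun_comp (fun y => Rmax (-B) (Rmin B y) * Rmax (-B) (Rmin B y)) phi)).
  exists (mkStepFun (stepfun_comp (fun y => 2 * B * Rmax 0 (Rmin y (2 * B))) psi)).
  split.
  - intros t Ht. simpl.
    assert (Ht2 : a <= t <= b) by (unfold Rmin, Rmax in Ht; destruct (Rle_dec a b); lra).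
    pose proof (HB t Ht2) as Hu. pose proof (Hp t Ht) as Hpt.
    destruct (clip_facts B (f t) (phi t) HBpos Hu) as [C1 [C2 C3]].
    set (w := Rmax (-B) (Rmin B (phi t))) in *.
    replace (f t * f t - w * w) with ((f t - w) * (f t + w)) by ring.
    rewrite Rabs_mult.
    assert (Rabs (f t - w) <= Rmax 0 (Rmin (psi t) (2 * B))).
    { apply Rle_trans with (Rmin (psi t) (2 * B)); [|apply Rmax_r].
      apply Rmin_glb; lra. }
    rewrite (Rmult_comm (2 * B)).
    apply Rmult_le_compat; auto using Rabs_pos.
  - set (PS := mkStepFun (stepfun_comp (fun y => 2 * B * Rmax 0 (Rmin y (2 * B))) psi)).
    assert (L1 : 0 <= RiemannInt_SF PS).
    { replace 0 with (RiemannInt_SF (mkStepFun (StepFun_P4 a b 0))).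
      2: rewrite StepFun_P18; ring.
      apply StepFun_P37; auto. intros x Hx. simpl. unfold fct_cte.
      apply Rmult_le_pos; [lra| apply Rmax_l]. }
    assert (L2 : RiemannInt_SF PS <= RiemannInt_SF (mkStepFun (StepFun_P28 (2 * B) (mkStepFun (StepFun_P4 a b 0)) psi))).
    { apply StepFun_P37; auto. intros x Hx. simpl. unfold fct_cte.
      assert (Hx' : Rmin a b <= x <= Rmax a b) by (unfold Rmin, Rmax; destruct (Rle_dec a b); lra).
      pose proof (Hp x Hx'). pose proof (Rabs_pos (f x - phi x)).
      assert (Rmax 0 (Rmin (psi x) (2 * B)) <= psi x).
      { apply Rmax_lub; [lra| apply Rmin_l]. }
      nra. }
    rewrite StepFun_P30, StepFun_P18 in L2.
    pose proof (Rle_abs (RiemannInt_SF psi)).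
    assert (E : eps / (2 * B + 1) * (2 * B + 1) = eps) by (field; lra).
    pose proof (cond_pos eps).
    rewrite Rabs_pos_eq by lra.
    assert (2 * B * RiemannInt_SF psi <= 2 * B * (eps / (2 * B + 1))) by (apply Rmult_le_compat_l; lra).
    nra.
Qed.
Lemma sum_support3_gen (g : nat -> R) p :
  (forall m, m <> p -> m <> S p -> m <> S (S p) -> g m = 0) ->
  forall n, sum_f_R0 g n = (if Nat.leb p n then g p else 0)
     + (if Nat.leb (S p) n then g (S p) else 0) + (if Nat.leb (S (S p)) n then g (S (S p)) else 0).
Proof.
  intros Hg n. induction n as [|n IH].
  - simpl. destruct p as [|p].
    + simpl. lra.
    + simpl. rewrite Hg by lia. lra.
  - change (sum_f_R0 g (S n)) with (sum_f_R0 g n + g (S n)). rewrite IH.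
    destruct (Nat.eq_dec (S n) p) as [E|E];
    [|destruct (Nat.eq_dec (S n) (S p)) as [E2|E2];
      [|destruct (Nat.eq_dec (S n) (S (S p))) as [E3|E3]]].
    + subst p. destruct (Nat.leb_spec (S n) n); destruct (Nat.leb_spec (S n) (S n));
      destruct (Nat.leb_spec (S (S n)) n); destruct (Nat.leb_spec (S (S n)) (S n));
      destruct (Nat.leb_spec (S (S (S n))) n); destruct (Nat.leb_spec (S (S (S n))) (S n)); try lia; lra.
    + injection E2 as E2; subst n. destruct (Nat.leb_spec p p); destruct (Nat.leb_spec p (S p));
      destruct (Nat.leb_spec (S p) p); destruct (Nat.leb_spec (S p) (S p));
      destruct (Nat.leb_spec (S (S p)) p); destruct (Nat.leb_spec (S (S p)) (S p)); try lia; lra.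
    + injection E3 as E3; subst n. destruct (Nat.leb_spec p (S p)); destruct (Nat.leb_spec p (S (S p)));
      destruct (Nat.leb_spec (S p) (S p)); destruct (Nat.leb_spec (S p) (S (S p)));
      destruct (Nat.leb_spec (S (S p)) (S p)); destruct (Nat.leb_spec (S (S p)) (S (S p))); try lia; lra.
    + rewrite (Hg (S n)) by assumption.
      destruct (Nat.leb_spec p n); destruct (Nat.leb_spec p (S n));
      destruct (Nat.leb_spec (S p) n); destruct (Nat.leb_spec (S p) (S n));
      destruct (Nat.leb_spec (S (S p)) n); destruct (Nat.leb_spec (S (S p)) (S n)); try lia; lra.
Qed.

Lemma zsum3 (a : Z -> R) : (forall k, (k >= 2 \/ k <= -2)%Z -> a k = 0) ->
  zsum a = a (-1)%Z + a 0%Z + a 1%Z.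
Proof.
  intro Ha. unfold zsum. apply lim_seq_eq. apply (Un_cv_ev _ _ 1%nat).
  intros n Hn. unfold zpartial.
  rewrite (sum_support3_gen _ (pred n)).
  - destruct (Nat.leb_spec (pred n) (2 * n)); [|lia].
    destruct (Nat.leb_spec (S (pred n)) (2 * n)); [|lia].
    destruct (Nat.leb_spec (S (S (pred n))) (2 * n)); [|lia].
    replace (Z.of_nat (pred n) - Z.of_nat n)%Z with (-1)%Z by lia.
    replace (Z.of_nat (S (pred n)) - Z.of_nat n)%Z with 0%Z by lia.
    replace (Z.of_nat (S (S (pred n))) - Z.of_nat n)%Z with 1%Z by lia.
    reflexivity.
  - intros m H1 H2 H3. apply Ha. lia.
Qed.
Section S.
Variables (s : R -> R) (Ts tau : R).
Hypothesis Hsupp : forall t, (t < 0 \/ Ts < t) -> s t = 0.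
Hypothesis Htau : 0 < tau < Ts.

Lemma ss_zero u v : (u - v > Ts \/ v - u > Ts) -> s u * s v = 0.
Proof.
  intro H.
  destruct (Rlt_dec u 0) as [H1|H1]; [rewrite (Hsupp u) by lra; ring|].
  destruct (Rlt_dec Ts u) as [H2|H2]; [rewrite (Hsupp u) by lra; ring|].
  destruct (Rlt_dec v 0) as [H3|H3]; [rewrite (Hsupp v) by lra; ring|].
  destruct (Rlt_dec Ts v) as [H4|H4]; [rewrite (Hsupp v) by lra; ring|].
  lra.
Qed.

Lemma prod_zero i j k : (k >= 2 \/ k <= -2)%Z ->
  forall t, Scomp s tau i t * Scomp s tau j (t - IZR k * Ts) = 0.
Proof.
  intros Hk t.
  assert (HK : IZR k * Ts >= 2 * Ts \/ IZR k * Ts <= - 2 * Ts).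
  { destruct Hk as [Hk|Hk]; [left; apply Z.ge_le in Hk; apply IZR_le in Hk
                              | right; apply IZR_le in Hk]; simpl in Hk; nra. }
  destruct i, j; simpl; apply ss_zero; lra.
Qed.

Lemma G_zero i j k : (k >= 2 \/ k <= -2)%Z -> G s tau Ts k i j = 0.
Proof. intro Hk. unfold G. apply RInt_R_zero. apply prod_zero; exact Hk. Qed.

Definition Tex (g : Z -> R) (w : R) : Cpx :=
  mkC (g (-1)%Z * cos (IZR (-1) * w) + g 0%Z * cos (IZR 0 * w) + g 1%Z * cos (IZR 1 * w))
      (- (g (-1)%Z * sin (IZR (-1) * w)) + - (g 0%Z * sin (IZR 0 * w)) + - (g 1%Z * sin (IZR 1 * w))).

Lemma Ttilde_ex w i j : Ttilde s tau Ts w i j = Tex (fun k => G s tau Ts k i j) w.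
Proof.
  unfold Ttilde, Tex. f_equal; apply zsum3; intros k Hk; rewrite G_zero by exact Hk; ring.
Qed.

Lemma G11_p1 : G s tau Ts 1%Z I1 I1 = 0.
Proof.
  unfold G. unfold RInt_R. apply lim_seq_eq. apply (Un_cv_ev _ _ 0%nat). intros n _.
  apply (spike_int _ _ _ Ts). { pose proof (pos_INR n); lra. }
  intros t Ht. simpl.
  destruct (Rlt_dec t 0) as [H1|H1]; [rewrite (Hsupp t) by lra; ring|].
  destruct (Rlt_dec Ts t) as [H2|H2]; [rewrite (Hsupp t) by lra; ring|].
  rewrite (Hsupp (t - 1 * Ts)); [ring|]. left. destruct (Req_dec t Ts); [contradiction|lra].
Qed.

Lemma G11_m1 : G s tau Ts (-1)%Z I1 I1 = 0.
Proof.
  unfold G. unfold RInt_R. apply lim_seq_eq. apply (Un_cv_ev _ _ 0%nat). intros n _.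
  apply (spike_int _ _ _ 0). { pose proof (pos_INR n); lra. }
  intros t Ht. simpl.
  destruct (Rlt_dec t 0) as [H1|H1]; [rewrite (Hsupp t) by lra; ring|].
  destruct (Rlt_dec Ts t) as [H2|H2]; [rewrite (Hsupp t) by lra; ring|].
  rewrite (Hsupp (t - -1 * Ts)); [ring|]. right. destruct (Req_dec t 0); [contradiction|lra].
Qed.

Lemma G11_0 : inhabited (Riemann_integrable s 0 Ts) ->
  RInt (fun t => s t * s t) 0 Ts = 1 -> G s tau Ts 0%Z I1 I1 = 1.
Proof.
  intros [Hi] He.
  assert (Hsq := integrable_sq s 0 Ts ltac:(lra) Hi).
  unfold G. replace (fun t => Scomp s tau I1 t * Scomp s tau I1 (t - IZR 0 * Ts)) with (fun t => s t * s t).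
  2:{ apply functional_extensionality; intro t; simpl. replace (t - 0 * Ts) with t by ring. reflexivity. }
  rewrite (RInt_eq _ _ _ Hsq) in He.
  unfold RInt_R. apply lim_seq_eq.
  destruct (INR_unbounded Ts) as [N HN].
  apply (Un_cv_ev _ _ N). intros n Hn.
  assert (HnT : Ts <= INR n) by (apply le_INR in Hn; lra).
  destruct (zero_open_int (fun t => s t * s t) (- INR n) 0) as [p1 E1].
  { pose proof (pos_INR n); lra. }
  { intros x Hx. rewrite (Hsupp x) by lra; ring. }
  destruct (zero_open_int (fun t => s t * s t) Ts (INR n)) as [p3 E3].
  { lra. }
  { intros x Hx. rewrite (Hsupp x) by lra; ring. }
  pose (p12 := RiemannInt_P24 p1 Hsq).
  pose (p := RiemannInt_P24 p12 p3).
  rewrite (RInt_eq _ _ _ p), <- (RiemannInt_P26 p12 p3 p), <- (RiemannInt_P26 p1 Hsq p12).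
  rewrite E1, E3, He. ring.
Qed.

Lemma T11_re w : inhabited (Riemann_integrable s 0 Ts) ->
  RInt (fun t => s t * s t) 0 Ts = 1 -> Re (Ttilde s tau Ts w I1 I1) = 1.
Proof.
  intros Hi He. rewrite Ttilde_ex. unfold Tex; simpl Re.
  rewrite G11_p1, G11_m1, (G11_0 Hi He).
  replace (IZR 0 * w) with 0 by (simpl; ring). rewrite cos_0. ring.
Qed.
End S.
Lemma pd_det (M : idx -> idx -> Cpx) : pos_def M ->
  0 < Re (Csub (Cmul (M I1 I1) (M I2 I2)) (Cmul (M I1 I2) (M I2 I1))).
Proof.
  intro H.
  assert (NZ : mkC 1 0 <> C0) by (intro E; injection E; lra).
  destruct (H (mkC 1 0) C0 (or_introl NZ)) as [A1 B1].
  destruct (H C0 (mkC 1 0) (or_intror NZ)) as [A2 B2].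
  destruct (H (mkC 1 0) (mkC 1 0) (or_introl NZ)) as [A3 B3].
  destruct (H (mkC 1 0) (mkC 0 1) (or_introl NZ)) as [A4 B4].
  destruct (M I1 I1) as [p11 q11] eqn:E11.
  destruct (M I1 I2) as [p12 q12] eqn:E12.
  destruct (M I2 I1) as [p21 q21] eqn:E21.
  destruct (M I2 I2) as [p22 q22] eqn:E22.
  unfold quad_form, Cadd, Cmul, Cconj, C0 in *; rewrite ?E11, ?E12, ?E21, ?E22 in *; simpl in *.
  assert (P : 0 < p11) by lra.
  assert (NZ2 : mkC p11 0 <> C0) by (intro E; injection E; lra).
  destruct (H (mkC (- p12) (- q12)) (mkC p11 0) (or_intror NZ2)) as [A5 B5].
  unfold quad_form, Cadd, Cmul, Cconj, C0 in *; rewrite ?E11, ?E12, ?E21, ?E22 in *; simpl in *.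
  assert (q11 = 0) by lra. assert (q22 = 0) by lra.
  assert (q21 = - q12) by lra. assert (p21 = p12) by lra. subst.
  assert (KEY : 0 < p11 * (p11 * p22 - 0 * 0 - (p12 * p12 - q12 * - q12))) by nra.
  apply (Rmult_lt_reg_l p11); lra.
Qed.

Theorem theorem10 (s : R -> R) (Ts tau : R)
  (Hsupp : forall t, (t < 0 \/ Ts < t) -> s t = 0)
  (Hint : inhabited (Riemann_integrable s 0 Ts))
  (Henergy : RInt (fun t => s t * s t) 0 Ts = 1)
  (Htau : 0 < tau < Ts)
  (Hpd : forall w, - PI <= w <= PI -> pos_def (Ttilde s tau Ts w)) :
  forall (rho0 : R) (a1 a2 : Cpx), 0 < rho0 -> a1 <> C0 -> a2 <> C0 ->
    I_EMacA s tau Ts rho0 a1 a2 > ln (1 + rho0 * (Cnorm2 a1 + Cnorm2 a2)).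
Proof.
  intros rho0 a1 a2 Hr Ha1 Ha2.
  assert (Npos : forall a, a <> C0 -> 0 < Cnorm2 a).
  { intros [x y] Ha. unfold Cnorm2; simpl.
    destruct (Req_dec x 0) as [->|Hx]; [destruct (Req_dec y 0) as [->|Hy]|].
    - exfalso; apply Ha; reflexivity.
    - nra.
    - nra. }
  pose proof (Npos a1 Ha1) as N1. pose proof (Npos a2 Ha2) as N2.
  set (c := rho0 * (Cnorm2 a1 + Cnorm2 a2)).
  set (d := rho0 ^ 2 * Cnorm2 a1 * Cnorm2 a2).
  assert (Hc : 0 < c) by (unfold c; nra).
  assert (Hd : 0 < d) by (unfold d; simpl; apply Rmult_lt_0_compat; [apply Rmult_lt_0_compat|]; nra).
  set (D := fun w => Re (detT s tau Ts w)).
  set (F := fun w => ln (1 + c + d * D w)).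
  unfold I_EMacA. fold c d.
  replace (fun w => ln (1 + c * Re (Ttilde s tau Ts w I1 I1) + d * Re (detT s tau Ts w))) with F.
  2:{ apply functional_extensionality; intro w. unfold F, D.
      rewrite (T11_re s Ts tau Hsupp Htau w Hint Henergy). f_equal; ring. }
  assert (Dpos : forall w, - PI <= w <= PI -> 0 < D w).
  { intros w Hw. unfold D, detT. apply pd_det. apply Hpd; exact Hw. }
  assert (Dcont : forall x, continuity_pt D x).
  { intro x.
    replace D with (fun w => Re (Csub (Cmul (Tex (fun k => G s tau Ts k I1 I1) w) (Tex (fun k => G s tau Ts k I2 I2) w))
                     (Cmul (Tex (fun k => G s tau Ts k I1 I2) w) (Tex (fun k => G s tau Ts k I2 I1) w)))).
    2:{ apply functional_extensionality; intro w. unfold D, detT.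
        rewrite !(Ttilde_ex s Ts tau Hsupp Htau). reflexivity. }
    unfold Tex, Csub, Cmul; simpl Re; simpl Im. reg. }
  assert (Fcont : forall x, - PI <= x <= PI -> continuity_pt F x).
  { intros x Hx. pose proof (Dpos x Hx).
    apply (continuity_pt_comp (fun w => 1 + c + d * D w) ln).
    - reg. apply Dcont.
    - apply derivable_continuous_pt.
      exists (/ (1 + c + d * D x)). apply derivable_pt_lim_ln. nra. }
  pose proof PI_RGT_0 as Hpi.
  assert (Hab : - PI <= PI) by lra.
  pose (pr := continuity_implies_RiemannInt Hab Fcont).
  rewrite (RInt_eq _ _ _ pr).
  destruct (continuity_ab_min F (- PI) PI Hab Fcont) as [mx [Hmin Hmx]].
  assert (Hlt : ln (1 + c) < F mx).
  { unfold F. apply ln_increasing; [lra|]. pose proof (Dpos mx Hmx). nra. }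
  assert (Hlow : F mx * (PI - - PI) <= RiemannInt pr).
  { rewrite <- (RiemannInt_P15 (RiemannInt_P14 (- PI) PI (F mx))).
    apply RiemannInt_P19; [lra|]. intros x Hx; unfold fct_cte; apply Hmin; lra. }
  set (RI := RiemannInt pr) in *.
  assert (E : / (2 * PI) * RI - ln (1 + c) = / (2 * PI) * (RI - 2 * PI * ln (1 + c))) by (field; lra).
  assert (0 < / (2 * PI) * (RI - 2 * PI * ln (1 + c))).
  { apply Rmult_lt_0_compat; [apply Rinv_0_lt_compat; lra| nra]. }
  unfold Rgt; lra.
Qed.
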